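(* Let $a \in \mathbb{R}$ and $w \in \mathbb{C}$. Then: (I) $T(a,w) = (0,\infty)$ if and only if $a \ge |w|$ and $a > \operatorname{Re}(w)$. (II) $T(a,w)$ is a nonempty proper subset of $(0,\infty)$ if and only if $w \neq 0$ and $\operatorname{Re}(w) < a < |w|$. In this case $T(a,w) = (0, \tau_c(a,w))$, where $$\tau_c(a,w) = \frac{1}{\sqrt{|w|^2-a^2}}\left[|\operatorname{Arg}(w)| - \arccos\left(\frac{a}{|w|}\right)\right] = \frac{1}{\sqrt{|w|^2-a^2}}\left[|\operatorname{Arg}(w)| - \operatorname{arccot}\left(\frac{a}{\sqrt{|w|^2-a^2}}\right)\right] > 0.$$ (III) $T(a,w) = \emptyset$ if and only if $a \le \operatorname{Re}(w)$.
   Context: For $a, w \in \mathbb{C}$, $T(a,w)$ denotes the set of all $\tau > 0$ such that every root $z \in \mathbb{C}$ of $z + a - w e^{-\tau z} = 0$ has negative real part. $\operatorname{Arg}(w) \in (-\pi,\pi]$ is the principal argument of $w \neq 0$; $\arccos : [-1,1] \to [0,\pi]$ is the inverse of $\cos|_{[0,\pi]}$; $\operatorname{arccot}: \mathbb{R} \to (0,\pi)$ is the inverse of $\cot|_{(0,\pi)}$. *)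

(* Defs.v *)
From Stdlib Require Import Reals.
From Coquelicot Require Import Coquelicot.
Open Scope R_scope.

Definition cexp (z : C) : C :=
  (exp (Re z) * cos (Im z), exp (Re z) * sin (Im z)).

Definition T (a : R) (w : C) : R -> Prop :=
  fun tau => 0 < tau /\
    forall z : C, (z + RtoC a - w * cexp (- (RtoC tau * z)))%C = 0%C -> Re z < 0.

(* principal argument Arg w in (-PI, PI] (atan2 convention; Arg 0 := 0, unused) *)
Definition Arg (w : C) : R :=
  let x := Re w in let y := Im w in
  if Rlt_dec 0 x then atan (y / x)
  else if Rlt_dec x 0 then
    (if Rle_dec 0 y then atan (y / x) + PI else atan (y / x) - PI)
  else (if Rlt_dec 0 y then PI / 2
        else if Rlt_dec y 0 then - (PI / 2) else 0).

(* arccot : R -> (0, PI), inverse of cot restricted to (0, PI) *)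
Definition arccot (x : R) : R := PI / 2 - atan x.

(* critical delay (Stdlib's acos maps [-1,1] onto [0,PI]) *)
Definition tau_c (a : R) (w : C) : R :=
  / sqrt (Cmod w ^ 2 - a ^ 2) * (Rabs (Arg w) - acos (a / Cmod w)).

(* Main.v *)
Require Import Defs.
From Stdlib Require Import Reals Lra Psatz Lia.
From Coquelicot Require Import Coquelicot.
Open Scope R_scope.

Lemma sqrt_ratio x y : x <> 0 -> sqrt (1 + (y/x)²) = sqrt (x^2+y^2) / Rabs x.
Proof.
  intros Hx.
  assert (Ha: 0 < Rabs x) by (apply Rabs_pos_lt; auto).
  assert (E: 1 + (y/x)² = (sqrt (x^2+y^2) / Rabs x)^2).
  { replace ((sqrt (x^2+y^2) / Rabs x)^2) with (sqrt (x^2+y^2)^2/(Rabs x^2)) by (field; lra).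
    rewrite pow2_sqrt by nra. rewrite pow2_abs. unfold Rsqr. field. auto. }
  rewrite E, sqrt_pow2; auto.
  apply Rdiv_le_0_compat; [apply sqrt_pos|lra].
Qed.

Lemma Arg_polar (w : C) : w <> 0%C ->
  Re w = Cmod w * cos (Arg w) /\ Im w = Cmod w * sin (Arg w).
Proof.
  destruct w as [x y]. intros Hw. unfold Arg, Cmod, Re, Im; cbn [fst snd].
  destruct (Rlt_dec 0 x) as [Hx|Hx].
  - rewrite cos_atan, sin_atan, sqrt_ratio by lra. rewrite Rabs_pos_eq by lra.
    assert (0 < sqrt (x^2+y^2)) by (apply sqrt_lt_R0; nra).
    split; field; split; lra.
  - destruct (Rlt_dec x 0) as [Hx'|Hx'].
    + assert (0 < sqrt (x^2+y^2)) by (apply sqrt_lt_R0; nra).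
      destruct (Rle_dec 0 y).
      * rewrite neg_cos, neg_sin, cos_atan, sin_atan, sqrt_ratio by lra.
        rewrite Rabs_left by lra. split; field; split; lra.
      * rewrite cos_minus, sin_minus, cos_PI, sin_PI, cos_atan, sin_atan, sqrt_ratio by lra.
        rewrite Rabs_left by lra. split; field; split; lra.
    + assert (x = 0) by lra. subst x.
      destruct (Rlt_dec 0 y).
      * rewrite cos_PI2, sin_PI2. replace (0^2+y^2) with (y^2) by ring.
        rewrite sqrt_pow2 by lra. lra.
      * destruct (Rlt_dec y 0).
        -- rewrite cos_neg, sin_neg, cos_PI2, sin_PI2. replace (0^2+y^2) with ((-y)^2) by ring.
           rewrite sqrt_pow2 by lra. lra.
        -- exfalso. apply Hw. replace y with 0 by lra. reflexivity.
Qed.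

Lemma Arg_bound w : -PI < Arg w <= PI.
Proof.
  destruct w as [x y]. unfold Arg, Re, Im; cbn [fst snd]. pose proof PI_RGT_0.
  pose proof (atan_bound (y/x)).
  destruct (Rlt_dec 0 x) as [Hx|Hx]; [lra|].
  destruct (Rlt_dec x 0) as [Hx'|Hx'].
  - destruct (Rle_dec 0 y).
    + assert (y/x <= 0). { unfold Rdiv. assert (/x < 0) by (apply Rinv_lt_0_compat; lra). nra. }
      assert (atan (y/x) <= 0). { destruct (Req_dec (y/x) 0) as [E|E]. rewrite E, atan_0; lra.
        rewrite <- atan_0. left. apply atan_increasing. lra. }
      lra.
    + assert (0 < y/x). { unfold Rdiv. assert (/x < 0) by (apply Rinv_lt_0_compat; lra). nra. }
      assert (0 < atan (y/x)). { rewrite <- atan_0. apply atan_increasing. lra. }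
      lra.
  - destruct (Rlt_dec 0 y); [lra|]. destruct (Rlt_dec y 0); lra.
Qed.

Lemma cont_form (x : R) : x <> 0 -> continuous (fun y => atan (sqrt (1 - y²) / y)) x.
Proof.
  intros Hx. apply continuous_atan_comp.
  apply (continuous_mult (fun y => sqrt (1 - y²)) (fun y => / y)).
  - apply continuous_sqrt_comp. apply continuity_pt_filterlim. unfold Rsqr. reg.
  - apply continuous_Rinv_comp; auto. apply continuous_id.
Qed.

Lemma acos_cont (x : R) : continuous acos x.
Proof.
  destruct (Rlt_dec 0 x) as [Hx|Hx].
  - apply continuous_ext_loc with (fun y => atan (sqrt (1 - y²) / y)).
    + apply (filter_imp (fun y => 0 < y)). intros y Hy. symmetry; apply acos_atan; auto.
      apply open_gt; auto.
    + apply cont_form; lra.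
  - destruct (Rlt_dec x 0) as [Hx'|Hx'].
    + apply continuous_ext_loc with (fun y => PI - atan (sqrt (1 - (-y)²) / (-y))).
      * apply (filter_imp (fun y => y < 0)). intros y Hy.
        pose proof (acos_opp (-y)) as E. rewrite Ropp_involutive in E. rewrite E, (acos_atan (-y)) by lra. reflexivity.
        apply open_lt; auto.
      * apply (continuous_minus (fun _ => PI)). apply continuous_const.
        apply (continuous_comp Ropp (fun y => atan (sqrt (1 - y²) / y))).
        apply continuity_pt_filterlim; reg. apply cont_form; lra.
    + assert (x = 0) by lra. subst x. apply continuity_pt_filterlim.
      apply derivable_continuous_pt. apply derivable_pt_acos. lra.
Qed.

Definition sK (K u : R) : R := K * exp (- u).
Definition qK (K u : R) : R := u * exp u / K.
Definition gK (K u : R) : R := acos (qK K u) + sK K u * sqrt (1 - (qK K u)^2).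
Definition dgK (K u : R) : R := - (exp u / K * (1 + 2 * u) + sK K u) / sqrt (1 - (qK K u)^2).

Lemma is_derive_acos x : -1 < x < 1 -> is_derive acos x (-1 / sqrt (1 - x²)).
Proof.
  intros H. apply is_derive_Reals. apply (derive_pt_eq_1 _ _ _ (derivable_pt_acos x H)).
  apply derive_pt_acos.
Qed.

Lemma gK_derive K u : 0 < K -> -1 < qK K u < 1 -> is_derive (gK K) u (dgK K u).
Proof.
  intros HK Hq.
  assert (Hr : 0 < 1 - (qK K u)^2) by nra.
  assert (Hs : 0 < sqrt (1 - (qK K u)^2)) by (apply sqrt_lt_R0; auto).
  assert (H1 : is_derive (fun u => acos (qK K u)) u
                 ((1+u) * exp u / K * (-1 / sqrt (1 - (qK K u)²)))).
  { apply (is_derive_comp acos (qK K)). apply is_derive_acos; auto.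
    unfold qK. auto_derive; auto. field. lra. }
  assert (H2 : is_derive (fun u => sK K u * sqrt (1 - (qK K u)^2)) u
                 (- sK K u * sqrt (1 - (qK K u)^2)
                  + sK K u * (- qK K u * ((1+u) * exp u / K)) / sqrt (1 - (qK K u)^2))).
  { unfold sK, qK in *. auto_derive.
    - replace (1 + - (u * exp u * / K * (u * exp u * / K * 1))) with (1 - (u * exp u / K) ^ 2) by (unfold Rdiv; ring). auto.
    - replace (1 + - (u * exp u * / K * (u * exp u * / K * 1))) with (1 - (u * exp u / K) ^ 2) by (unfold Rdiv; ring).
      field. split; lra. }
  assert (H3 := is_derive_plus _ _ _ _ _ H1 H2).
  match type of H3 with is_derive _ _ ?l => replace (dgK K u) with l end.
  - unfold gK. eapply is_derive_ext; [|apply H3]. intros t. reflexivity.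
  - unfold dgK, plus; simpl. unfold sK, qK in *. unfold Rsqr in *.
    replace (exp (- u)) with (/ exp u) by (symmetry; apply exp_Ropp).
    assert (0 < exp u) by apply exp_pos.
    replace (u * exp u / K * (u * exp u / K)) with (u * exp u / K * (u * exp u / K * 1)) by ring.
    set (q := u * exp u / K) in *.
    assert (Rr : sqrt (1 - q * (q * 1)) * sqrt (1 - q * (q * 1)) = 1 - q * (q*1)).
    { apply sqrt_sqrt. simpl in Hr. lra. }
    set (r := sqrt (1 - q * (q * 1))) in *.
    assert (0 < r) by (unfold r; simpl in Hs; lra).
    replace (- (K * / exp u) * r) with (- (K * / exp u) * (1 - q * (q*1)) / r)
      by (rewrite <- Rr; field; lra).
    unfold q. field. split; lra.
Qed.

Definition fK (K u : R) : R := u + sK K u.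

Lemma sK_pos K u : 0 < K -> 0 < sK K u.
Proof. intros; unfold sK; pose proof (exp_pos (-u)); nra. Qed.

Lemma fK_q K u : 0 < K -> fK K u = sK K u * (qK K u + 1).
Proof.
  intros HK; unfold fK, sK, qK. rewrite exp_Ropp. pose proof (exp_pos u). field; lra.
Qed.

Lemma uK_q K u : 0 < K -> u - sK K u = sK K u * (qK K u - 1).
Proof.
  intros HK; unfold sK, qK. rewrite exp_Ropp. pose proof (exp_pos u). field; lra.
Qed.

Lemma q_ge_m1 K u : 0 < K -> (-1 <= qK K u <-> 0 <= fK K u).
Proof. intros HK. rewrite fK_q by auto. pose proof (sK_pos K u HK). split; intros; nra. Qed.

Lemma q_gt_m1 K u : 0 < K -> (-1 < qK K u <-> 0 < fK K u).
Proof. intros HK. rewrite fK_q by auto. pose proof (sK_pos K u HK). split; intros; nra. Qed.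

Lemma q_le_1 K u : 0 < K -> (qK K u <= 1 <-> u - sK K u <= 0).
Proof. intros HK. rewrite uK_q by auto. pose proof (sK_pos K u HK). split; intros; nra. Qed.

Lemma q_lt_1 K u : 0 < K -> (qK K u < 1 <-> u - sK K u < 0).
Proof. intros HK. rewrite uK_q by auto. pose proof (sK_pos K u HK). split; intros; nra. Qed.

Lemma q_eq_m1 K u : 0 < K -> qK K u = -1 -> fK K u = 0.
Proof. intros HK H. rewrite fK_q, H by auto. ring. Qed.

Lemma u_minus_s_incr K u v : 0 < K -> u < v -> u - sK K u < v - sK K v.
Proof.
  intros HK H. unfold sK. assert (exp (-v) < exp (-u)) by (apply exp_increasing; lra). nra.
Qed.

Lemma exp_conv (c m : R) : exp (- m) >= exp (- c) * (1 + (c - m)).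
Proof.
  replace (- m) with (- c + (c - m)) by ring. rewrite exp_plus.
  pose proof (exp_ineq1_le (c - m)). pose proof (exp_pos (-c)). nra.
Qed.

Lemma fK_conv K m c u : 0 < K -> m <= c <= u -> fK K m < 0 -> fK K u < 0 -> fK K c < 0.
Proof.
  intros HK Hc Hm Hu. unfold fK, sK in *.
  destruct (Req_dec m c) as [E|E]; [subst; auto|].
  destruct (Req_dec c u) as [E'|E']; [subst; auto|].
  pose proof (exp_conv c m). pose proof (exp_conv c u). pose proof (exp_pos (-c)).
  assert (A : (u - c) * (m + K * exp (-m)) + (c - m) * (u + K * exp (-u)) < 0) by nra.
  assert (B : (u - c) * (m + K * exp (-m)) + (c - m) * (u + K * exp (-u))
              >= (u - m) * (c + K * exp (-c))).
  { assert (K * exp (-m) >= K * (exp (-c) * (1 + (c - m)))) by nra.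
    assert (K * exp (-u) >= K * (exp (-c) * (1 + (c - u)))) by nra.
    nra. }
  nra.
Qed.

Lemma fK_excl K t1 u t2 : 0 < K -> t1 < u < t2 ->
  (forall m, t1 <= m <= t2 -> 0 <= fK K m) -> fK K u = 0 -> u = -1.
Proof.
  intros HK Hu Hf H0. unfold fK, sK in *.
  set (S := K * exp (- u)) in *.
  assert (HS : 0 < S) by (unfold S; pose proof (exp_pos (-u)); nra).
  destruct (Rtotal_order S 1) as [Hlt|[Heq|Hgt]]; [| lra |].
  -
    set (d := Rmin ((1 - S)/2) ((u - t1)/2)).
    assert (Hd1 : d <= (1 - S)/2) by apply Rmin_l.
    assert (Hd2 : d <= (u - t1)/2) by apply Rmin_r.
    assert (Hd0 : 0 < d) by (apply Rmin_pos; lra).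
    specialize (Hf (u - d) ltac:(lra)).
    replace (- (u - d)) with (- u + d) in Hf by ring. rewrite exp_plus in Hf.
    fold S in Hf. 
    assert (E1 : exp d * exp (- d) = 1) by (rewrite <- exp_plus; replace (d + - d) with 0 by ring; apply exp_0).
    pose proof (exp_ineq1_le (- d)). pose proof (exp_pos d).
    assert (exp d * (1 - d) <= 1) by nra.
    assert (S * exp d * (1 - d) <= S) by nra.
    replace (K * (exp (- u) * exp d)) with (S * exp d) in Hf by (unfold S; ring).
    assert (0 <= (1 - d) * (u - d + S * exp d)) by (apply Rmult_le_pos; lra).
    assert (u = - S) by lra. nra.
  - set (d := Rmin ((S - 1)/2) ((t2 - u)/2)).
    assert (Hd1 : d <= (S - 1)/2) by apply Rmin_l.
    assert (Hd2 : d <= (t2 - u)/2) by apply Rmin_r.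
    assert (Hd0 : 0 < d) by (apply Rmin_pos; lra).
    specialize (Hf (u + d) ltac:(lra)).
    replace (- (u + d)) with (- u + - d) in Hf by ring. rewrite exp_plus in Hf.
    fold S in Hf.
    assert (E1 : exp d * exp (- d) = 1) by (rewrite <- exp_plus; replace (d + - d) with 0 by ring; apply exp_0).
    pose proof (exp_ineq1_le d). pose proof (exp_pos (-d)).
    assert (exp (-d) * (1 + d) <= 1) by nra.
    replace (K * (exp (- u) * exp (-d))) with (S * exp (-d)) in Hf by (unfold S; ring).
    assert (0 <= (1 + d) * (u + d + S * exp (-d))) by (apply Rmult_le_pos; lra).
    assert (u = - S) by lra. nra.
Qed.

Lemma dgK_nonpos K u : 0 < K -> -1 <= qK K u <= 1 -> dgK K u <= 0.
Proof.
  intros HK Hq. unfold dgK.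
  assert (HN : 0 <= exp u / K * (1 + 2 * u) + sK K u).
  { unfold sK, qK in *. rewrite exp_Ropp. set (E := exp u / K).
    assert (0 < exp u) by apply exp_pos.
    assert (HE : 0 < E) by (unfold E; apply Rdiv_lt_0_compat; lra).
    replace (K * / exp u) with (/ E) by (unfold E; field; lra).
    replace (u * exp u / K) with (u * E) in Hq by (unfold E; field; lra).
    assert ((u*E)*(u*E) <= 1) by (destruct Hq; nra). pose proof (Rle_0_sqr (E*(1+u))) as Hsq; unfold Rsqr in Hsq.
    assert (E * E * (1 + 2 * u) + 1 >= 0) by nra.
    apply Rmult_le_reg_l with E; auto. rewrite Rmult_0_r, Rmult_plus_distr_l.
    replace (E * / E) with 1 by (field; lra). nra. }
  assert (0 <= / sqrt (1 - qK K u ^ 2)).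
  { destruct (Req_dec (sqrt (1 - qK K u ^ 2)) 0) as [E|E].
    - rewrite E, Rinv_0; lra.
    - left. apply Rinv_0_lt_compat. pose proof (sqrt_pos (1 - qK K u ^ 2)). lra. }
  unfold Rdiv. nra.
Qed.

Lemma gK_cont K : 0 < K -> continuity (gK K).
Proof.
  intros HK x. apply continuity_pt_filterlim. unfold gK.
  apply (continuous_plus (fun u => acos (qK K u)) (fun u => sK K u * sqrt (1 - qK K u ^ 2))).
  - apply (continuous_comp (qK K) acos).
    + apply continuity_pt_filterlim. unfold qK. apply derivable_continuous_pt. reg.
    + apply acos_cont.
  - apply (continuous_mult (sK K) (fun u => sqrt (1 - qK K u ^ 2))).
    + apply continuity_pt_filterlim. unfold sK. apply derivable_continuous_pt. reg.
    + apply continuous_sqrt_comp. apply continuity_pt_filterlim. unfold qK.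
      apply derivable_continuous_pt. reg.
Qed.

Lemma gK_mono0 K t1 t2 : 0 < K -> t1 <= t2 ->
  (forall u, t1 <= u <= t2 -> -1 <= qK K u <= 1) ->
  (forall u, t1 < u < t2 -> -1 < qK K u < 1) -> gK K t2 <= gK K t1.
Proof.
  intros HK H12 Hadm Hint.
  destruct (MVT_gen (gK K) t1 t2 (dgK K)) as [c [Hc E]].
  - rewrite Rmin_left, Rmax_right by lra. intros x Hx. apply gK_derive; auto.
  - intros x _. apply gK_cont; auto.
  - rewrite Rmin_left, Rmax_right in Hc by lra.
    pose proof (dgK_nonpos K c HK (Hadm c Hc)). nra.
Qed.

Lemma gK_mono K t1 t2 : 0 < K -> t1 <= t2 ->
  (forall u, t1 <= u <= t2 -> -1 <= qK K u <= 1) -> gK K t2 <= gK K t1.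
Proof.
  intros HK H12 Hadm.
  assert (Hf : forall m, t1 <= m <= t2 -> 0 <= fK K m).
  { intros m Hm. apply q_ge_m1; auto. apply Hadm; auto. }
  assert (Hint : forall u, t1 < u < t2 -> u <> -1 -> -1 < qK K u < 1).
  { intros u Hu Hn. split.
    - destruct (Hadm u ltac:(lra)) as [H _]. destruct H as [H|H]; auto.
      exfalso. apply Hn. apply (fK_excl K t1 u t2); auto. apply q_eq_m1; auto.
    - apply q_lt_1; auto. pose proof (u_minus_s_incr K u t2 HK (proj2 Hu)).
      assert (t2 - sK K t2 <= 0) by (apply q_le_1; auto; apply Hadm; lra). lra. }
  destruct (Rlt_dec t1 (-1)) as [Ha|Ha]; [destruct (Rlt_dec (-1) t2) as [Hb|Hb]|].
  - apply Rle_trans with (gK K (-1)).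
    + apply gK_mono0; auto; [lra| intros; apply Hadm; lra |].
      intros u Hu. apply Hint; lra.
    + apply gK_mono0; auto; [lra| intros; apply Hadm; lra |].
      intros u Hu. apply Hint; lra.
  - apply gK_mono0; auto. intros u Hu. apply Hint; lra.
  - apply gK_mono0; auto. intros u Hu. apply Hint; lra.
Qed.

Lemma gK_at_1 K u : qK K u = 1 -> gK K u = 0.
Proof. intros H. unfold gK. rewrite H, acos_1. replace (1 - 1^2) with 0 by ring. rewrite sqrt_0. ring. Qed.

Lemma gK_at_m1 K u : qK K u = -1 -> gK K u = PI.
Proof.
  intros H. unfold gK. rewrite H. replace (-1) with (- (1)) by ring. rewrite acos_opp, acos_1.
  replace (1 - (-(1))^2) with 0 by ring. rewrite sqrt_0. ring.
Qed.

Lemma root_iff (tau a : R) (w : C) (x y : R) : w <> 0%C ->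
  (((x,y) + RtoC a - w * cexp (- (RtoC tau * (x,y))))%C = 0%C) <->
  (x + a = Cmod w * exp (-(tau*x)) * cos (Arg w - tau*y) /\
   y = Cmod w * exp (-(tau*x)) * sin (Arg w - tau*y)).
Proof.
  intros Hw. destruct (Arg_polar w Hw) as [H1 H2].
  destruct w as [w1 w2]. unfold Re, Im in H1, H2; simpl in H1, H2.
  unfold cexp, Cplus, Cminus, Cmult, Copp, RtoC, Re, Im; simpl.
  replace (- (tau * x - 0 * y)) with (-(tau*x)) by ring.
  replace (- (tau * y + 0 * x)) with (-(tau*y)) by ring.
  set (W := Cmod (w1,w2)) in *. set (P := Arg (w1,w2)) in *. clearbody W P. subst w1 w2.
  unfold Rminus. rewrite cos_plus, sin_plus.
  split.
  - intros H. injection H as E1 E2. split; nra.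
  - intros [E1 E2]. apply injective_projections; simpl; nra.
Qed.

Lemma mod_lemma b th : cos th = cos b -> sin th = sin b ->
  exists k : Z, b = th + 2 * IZR k * PI.
Proof.
  intros Hc Hs.
  assert (Hd : cos (b - th) = 1).
  { rewrite cos_minus, Hc, Hs. pose proof (sin2_cos2 b). unfold Rsqr in *. lra. }
  assert (Hh : sin ((b - th)/2) = 0).
  { replace (b - th) with (2 * ((b - th)/2)) in Hd by field.
    rewrite cos_2a_sin in Hd. nra. }
  destruct (sin_eq_0_0 _ Hh) as [k Hk]. exists k. lra.
Qed.

Lemma final_bound phi G k : -PI < phi <= PI -> phi = G + 2 * IZR k * PI ->
  Rabs phi <= Rabs G.
Proof.
  intros Hp E. pose proof PI_RGT_0.
  destruct (Z.eq_dec k 0) as [->|Hk].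
  - rewrite E. replace (G + 2 * IZR 0 * PI) with G by (simpl; ring). lra.
  - destruct (Z.lt_ge_cases 0 k) as [Hpos|Hneg].
    + assert (1 <= IZR k) by (apply IZR_le; lia).
      assert (G <= - PI) by nra.
      rewrite (Rabs_left G) by lra. apply Rabs_le; lra.
    + assert (IZR k <= -1) by (apply IZR_le; lia).
      assert (PI <= G) by nra.
      rewrite (Rabs_right G) by lra. apply Rabs_le; lra.
Qed.

Lemma root_to_t (tau a : R) (w : C) (x y K : R) : 0 < tau -> w <> 0%C -> 0 <= x ->
  K = tau * Cmod w * exp (tau * a) ->
  x + a = Cmod w * exp (-(tau*x)) * cos (Arg w - tau*y) ->
  y = Cmod w * exp (-(tau*x)) * sin (Arg w - tau*y) ->
  exists t, tau * a <= t /\ -1 <= qK K t <= 1 /\ Rabs (Arg w) <= gK K t.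
Proof.
  intros Htau Hw Hx HK E1 E2.
  assert (HW : 0 < Cmod w) by (apply Cmod_gt_0; auto).
  set (W := Cmod w) in *. set (phi := Arg w) in *. set (b := phi - tau * y) in *.
  assert (HK0 : 0 < K) by (rewrite HK; pose proof (exp_pos (tau*a)); apply Rmult_lt_0_compat; nra).
  exists (tau * (x + a)).
  assert (Hs : sK K (tau * (x + a)) = tau * W * exp (- (tau * x))).
  { unfold sK. rewrite HK. rewrite Rmult_assoc, <- exp_plus. f_equal. f_equal. ring. }
  assert (Hq : qK K (tau * (x + a)) = cos b).
  { assert (Hqs : qK K (tau * (x + a)) * sK K (tau * (x + a)) = tau * (x + a)).
    { pose proof (fK_q K (tau * (x + a)) HK0). unfold fK in H. replace (sK K (tau * (x + a)) * (qK K (tau * (x + a)) + 1)) with (qK K (tau * (x + a)) * sK K (tau * (x + a)) + sK K (tau * (x + a))) in H by ring. lra. }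
    rewrite Hs in Hqs. pose proof (exp_pos (-(tau*x))).
    apply Rmult_eq_reg_r with (tau * W * exp (- (tau * x))).
    - rewrite Hqs, E1. ring.
    - assert (0 < tau * W * exp (- (tau * x))) by (apply Rmult_lt_0_compat; nra). lra. }
  split; [nra|]. split; [rewrite Hq; apply COS_bound|].
  unfold gK. rewrite Hq, Hs.
  replace (1 - cos b ^ 2) with (1 - (cos b)²) by (unfold Rsqr; ring).
  rewrite <- Rtrigo_facts.sin_cos_Rabs.
  set (th := acos (cos b)).
  assert (Hth : 0 <= th <= PI) by apply acos_bound.
  assert (Hcth : cos th = cos b) by (apply cos_acos, COS_bound).
  assert (Hsth : sin th = Rabs (sin b)).
  { unfold th. rewrite sin_acos by apply COS_bound. rewrite Rtrigo_facts.sin_cos_Rabs. reflexivity. }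
  set (S := tau * W * exp (- (tau * x))).
  assert (HS : 0 < S) by (unfold S; pose proof (exp_pos (-(tau*x))); apply Rmult_lt_0_compat; nra).
  assert (Hy : tau * y = S * sin b) by (unfold S; rewrite E2; fold b; ring).
  assert (Hbd : b = phi - tau * y) by reflexivity.
  assert (Hphi : phi = b + S * sin b) by lra.
  pose proof (Arg_bound w) as Hb. fold phi in Hb.
  destruct (Rle_dec 0 (sin b)) as [Hsb|Hsb].
  - rewrite (Rabs_right (sin b)) in Hsth |- * by lra.
    destruct (mod_lemma b th Hcth Hsth) as [k Hk].
    assert (phi = (th + S * sin th) + 2 * IZR k * PI) by (rewrite Hsth; lra).
    pose proof (final_bound phi _ k Hb H).
    assert (HG : 0 <= th + S * sin th) by (rewrite Hsth; nra).
    rewrite (Rabs_right (th + S * sin th)) in H0 by lra. rewrite Hsth in H0. exact H0.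
  - rewrite (Rabs_left (sin b)) in Hsth |- * by lra.
    assert (Hc' : cos (- th) = cos b) by (rewrite cos_neg; auto).
    assert (Hs' : sin (- th) = sin b) by (rewrite sin_neg; lra).
    destruct (mod_lemma b (-th) Hc' Hs') as [k Hk].
    assert (phi = (- th + S * sin (- th)) + 2 * IZR k * PI) by (rewrite Hs'; lra).
    pose proof (final_bound phi _ k Hb H).
    assert (HG : - th + S * sin (- th) <= 0) by (rewrite Hs'; nra).
    rewrite (Rabs_left1 (- th + S * sin (- th))) in H0 by lra. rewrite Hs' in H0. lra.
Qed.

Lemma t_to_root (tau a : R) (w : C) (K t : R) : 0 < tau -> w <> 0%C ->
  K = tau * Cmod w * exp (tau * a) -> tau * a <= t -> -1 <= qK K t <= 1 ->
  gK K t = Rabs (Arg w) ->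
  exists x y, 0 <= x /\ x + a = Cmod w * exp (-(tau*x)) * cos (Arg w - tau*y) /\
   y = Cmod w * exp (-(tau*x)) * sin (Arg w - tau*y).
Proof.
  intros Htau Hw HK Ht Hq Hg.
  assert (HW : 0 < Cmod w) by (apply Cmod_gt_0; auto).
  set (W := Cmod w) in *. set (phi := Arg w) in *.
  assert (HK0 : 0 < K) by (rewrite HK; pose proof (exp_pos (tau*a)); apply Rmult_lt_0_compat; nra).
  set (q := qK K t) in *. set (s := sK K t).
  assert (Hqs : s * q = t).
  { pose proof (fK_q K t HK0). unfold fK in H. fold s q in H. nra. }
  set (r := sqrt (1 - q²)).
  assert (Hsr : sin (acos q) = r) by (apply sin_acos; auto).
  assert (Hcr : cos (acos q) = q) by (apply cos_acos; auto).
  assert (Hg' : acos q + s * r = Rabs phi).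
  { rewrite <- Hg. unfold gK. fold q. fold s. unfold r. rewrite Rsqr_pow2. reflexivity. }
  assert (HE : W * exp (- (tau * (t / tau - a))) = s / tau).
  { unfold s, sK. rewrite HK. replace (- (tau * (t / tau - a))) with (tau * a + - t) by (field; lra).
    rewrite exp_plus. field. lra. }
  destruct (Rle_dec 0 phi) as [Hp|Hp].
  - exists (t / tau - a), (s * r / tau). split.
    { apply Rmult_le_reg_l with tau; auto. rewrite Rmult_0_r. unfold Rminus. rewrite Rmult_plus_distr_l.
      replace (tau * (t / tau)) with t by (field; lra). lra. }
    rewrite HE. rewrite Rabs_right in Hg' by lra.
    replace (phi - tau * (s * r / tau)) with (acos q) by (field_simplify; lra).
    rewrite Hsr, Hcr. rewrite <- Hqs. split; field; lra.
  - exists (t / tau - a), (- (s * r) / tau). split.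
    { apply Rmult_le_reg_l with tau; auto. rewrite Rmult_0_r. unfold Rminus. rewrite Rmult_plus_distr_l.
      replace (tau * (t / tau)) with t by (field; lra). lra. }
    rewrite HE. rewrite Rabs_left in Hg' by lra.
    replace (phi - tau * (- (s * r) / tau)) with (- acos q) by (field_simplify; lra).
    rewrite sin_neg, cos_neg, Hsr, Hcr. rewrite <- Hqs. split; field; lra.
Qed.

Lemma q_alpha tau a W : 0 < tau -> 0 < W ->
  qK (tau * W * exp (tau * a)) (tau * a) = a / W.
Proof. intros. unfold qK. pose proof (exp_pos (tau*a)). field. lra. Qed.

Lemma g_alpha tau a W : 0 < tau -> 0 < W ->
  gK (tau * W * exp (tau * a)) (tau * a) = acos (a / W) + tau * sqrt (W ^ 2 - a ^ 2).
Proof.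
  intros. unfold gK. rewrite q_alpha by auto. f_equal.
  assert (E : sK (tau * W * exp (tau * a)) (tau * a) = tau * W).
  { unfold sK. rewrite (Rmult_assoc (tau * W)), <- exp_plus. replace (tau * a + - (tau * a)) with 0 by ring.
    rewrite exp_0. ring. }
  rewrite E. replace (W ^ 2 - a ^ 2) with (W^2 * (1 - (a / W) ^ 2)) by (field; lra).
  rewrite sqrt_mult_alt by nra. rewrite sqrt_pow2 by lra. ring.
Qed.

Lemma exists_t2 K al : 0 < K -> al - sK K al <= 0 ->
  exists t2, al <= t2 /\ qK K t2 = 1.
Proof.
  intros HK Hal.
  set (M := Rmax al 0 + sK K al + 1).
  assert (HM : al <= M) by (unfold M; pose proof (Rmax_l al 0); pose proof (sK_pos K al HK); lra).
  assert (HhM : 0 <= M - sK K M).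
  { unfold sK at 1. assert (exp (- M) <= exp (- al)) by (destruct (Req_dec M al) as [->|]; [lra|left; apply exp_increasing; lra]).
    unfold M at 1. pose proof (Rmax_r al 0). unfold sK in *. nra. }
  destruct (IVT_gen (fun u => u - sK K u) al M 0) as [t2 [Ht2 E]].
  - intros x. unfold sK. reg.
  - rewrite Rmin_left, Rmax_right by lra. lra.
  - exists t2. rewrite Rmin_left, Rmax_right in Ht2 by lra. split; [lra|].
    pose proof (uK_q K t2 HK). pose proof (sK_pos K t2 HK). simpl in E. nra.
Qed.

From Stdlib Require Import Classical.

Lemma unstable (tau a : R) (w : C) : 0 < tau -> w <> 0%C -> a <= Cmod w ->
  (- Cmod w <= a -> Rabs (Arg w) <= gK (tau * Cmod w * exp (tau * a)) (tau * a)) ->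
  ~ T a w tau.
Proof.
  intros Htau Hw HaW Hcase [_ HT].
  assert (HW : 0 < Cmod w) by (apply Cmod_gt_0; auto).
  set (K := tau * Cmod w * exp (tau * a)) in *.
  assert (HK0 : 0 < K) by (unfold K; pose proof (exp_pos (tau*a)); apply Rmult_lt_0_compat; nra).
  set (al := tau * a) in *.
  assert (Hsal : sK K al = tau * Cmod w).
  { unfold sK, K, al. rewrite (Rmult_assoc (tau * Cmod w)), <- exp_plus.
    replace (tau * a + - (tau * a)) with 0 by ring. rewrite exp_0. ring. }
  destruct (exists_t2 K al HK0) as [t2 [Ht2 Hq2]].
  { rewrite Hsal. unfold al. nra. }
  assert (Hup : forall m, m <= t2 -> qK K m <= 1).
  { intros m Hm. apply q_le_1; auto. destruct (Req_dec m t2) as [->|Hne].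
    - pose proof (uK_q K t2 HK0). rewrite Hq2 in H. lra.
    - pose proof (u_minus_s_incr K m t2 HK0 ltac:(lra)). pose proof (uK_q K t2 HK0).
      rewrite Hq2 in H0. lra. }
  assert (Hpi : Rabs (Arg w) <= PI).
  { pose proof (Arg_bound w). apply Rabs_le; lra. }
  assert (Hph0 : 0 <= Rabs (Arg w)) by apply Rabs_pos.
  assert (Ht1 : exists t1, al <= t1 <= t2 /\ Rabs (Arg w) <= gK K t1 /\
            forall m, t1 <= m <= t2 -> 0 <= fK K m).
  { destruct (classic (exists u, al <= u <= t2 /\ fK K u < 0)) as [[u [Hu Hfu]]|Hno].
    - assert (Hf2 : 0 < fK K t2).
      { rewrite fK_q, Hq2 by auto. pose proof (sK_pos K t2 HK0). lra. }
      destruct (IVT_gen (fK K) u t2 0) as [t1 [Ht1 E]].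
      + intros x. unfold fK, sK. reg.
      + rewrite Rmin_left, Rmax_right by lra. lra.
      + rewrite Rmin_left, Rmax_right in Ht1 by lra.
        exists t1. split; [lra|]. split.
        * assert (qK K t1 = -1).
          { pose proof (fK_q K t1 HK0). pose proof (sK_pos K t1 HK0). nra. }
          rewrite gK_at_m1 by auto. auto.
        * intros m Hm. destruct (Rle_lt_dec 0 (fK K m)) as [|Hlt]; auto.
          exfalso. pose proof (fK_conv K u t1 m HK0 ltac:(lra) Hfu Hlt). lra.
    - exists al. split; [lra|]. split.
      + apply Hcase. assert (0 <= fK K al).
        { destruct (Rle_lt_dec 0 (fK K al)) as [|Hlt]; auto. exfalso. apply Hno. exists al. split; [lra|auto]. }
        rewrite fK_q, Hsal in H by auto.
        assert (Hqa : qK K al = a / Cmod w) by (unfold K, al; apply q_alpha; auto). rewrite Hqa in H.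
        assert (0 <= a / Cmod w + 1).
        { apply Rmult_le_reg_l with (tau * Cmod w); [nra|]. rewrite Rmult_0_r. lra. }
        assert (a / Cmod w * Cmod w = a) by (field; lra). nra.
      + intros m Hm. destruct (Rle_lt_dec 0 (fK K m)) as [|Hlt]; auto.
        exfalso. apply Hno. exists m. split; [lra|auto]. }
  destruct Ht1 as [t1 [Ht1 [Hg1 Hf1]]].
  destruct (IVT_gen (gK K) t1 t2 (Rabs (Arg w))) as [t [Ht E]].
  - exact (gK_cont K HK0).
  - rewrite (gK_at_1 K t2 Hq2). rewrite Rmin_right, Rmax_left; lra.
  - rewrite Rmin_left, Rmax_right in Ht by lra.
    assert (Hqt : -1 <= qK K t <= 1).
    { split; [apply (proj2 (q_ge_m1 K t HK0)); apply Hf1; lra | apply Hup; lra]. }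
    destruct (t_to_root tau a w K t Htau Hw eq_refl ltac:(unfold al in *; lra) Hqt E)
      as [x [y [Hx [E1 E2]]]].
    assert (Hroot := proj2 (root_iff tau a w x y Hw) (conj E1 E2)).
    specialize (HT _ Hroot). simpl in HT. lra.
Qed.

Lemma stable_delay (tau a : R) (w : C) : 0 < tau -> w <> 0%C -> - Cmod w < a ->
  gK (tau * Cmod w * exp (tau * a)) (tau * a) < Rabs (Arg w) -> T a w tau.
Proof.
  intros Htau Hw HaW Hg. split; auto. intros [x y] Hroot. simpl.
  destruct (Rlt_le_dec x 0) as [|Hx]; auto. exfalso.
  assert (HW : 0 < Cmod w) by (apply Cmod_gt_0; auto).
  destruct (proj1 (root_iff tau a w x y Hw) Hroot) as [E1 E2].
  set (K := tau * Cmod w * exp (tau * a)) in *.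
  destruct (root_to_t tau a w x y K Htau Hw Hx eq_refl E1 E2) as [t [Ht [Hqt Hgt]]].
  assert (HK0 : 0 < K) by (unfold K; pose proof (exp_pos (tau*a)); apply Rmult_lt_0_compat; nra).
  set (al := tau * a) in *.
  assert (Hup : forall m, m <= t -> qK K m <= 1).
  { intros m Hm. apply q_le_1; auto. destruct (Req_dec m t) as [->|Hne].
    - apply q_le_1; auto. apply Hqt.
    - pose proof (u_minus_s_incr K m t HK0 ltac:(lra)).
      assert (t - sK K t <= 0) by (apply q_le_1; auto; apply Hqt). lra. }
  assert (Hpi : Rabs (Arg w) <= PI).
  { pose proof (Arg_bound w). apply Rabs_le; lra. }
  destruct (classic (exists u, al <= u <= t /\ fK K u < 0)) as [[u [Hu Hfu]]|Hno].
  - assert (Hfa : 0 < fK K al).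
    { apply q_gt_m1; auto. assert (Hqa : qK K al = a / Cmod w) by (unfold K, al; apply q_alpha; auto).
      rewrite Hqa. apply Rmult_lt_reg_r with (Cmod w); auto.
      replace (a / Cmod w * Cmod w) with a by (field; lra). lra. }
    destruct (IVT_gen (fK K) al u 0) as [t1 [Ht1 E]].
    + intros z. unfold fK, sK. reg.
    + rewrite Rmin_right, Rmax_left by lra. lra.
    + rewrite Rmin_left, Rmax_right in Ht1 by lra.
      assert (Hq1 : qK K t1 = -1).
      { pose proof (fK_q K t1 HK0). pose proof (sK_pos K t1 HK0). nra. }
      assert (gK K t1 <= gK K al).
      { apply gK_mono; auto; [lra|]. intros m Hm. split.
        - apply (proj2 (q_ge_m1 K m HK0)).
          destruct (Rle_lt_dec 0 (fK K m)) as [|Hlt]; auto.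
          exfalso. pose proof (fK_conv K m t1 u HK0 ltac:(lra) Hlt Hfu). lra.
        - apply Hup; lra. }
      rewrite (gK_at_m1 K t1 Hq1) in H. lra.
  - assert (gK K t <= gK K al).
    { apply gK_mono; auto. intros m Hm. split.
      - apply (proj2 (q_ge_m1 K m HK0)).
        destruct (Rle_lt_dec 0 (fK K m)) as [|Hlt]; auto.
        exfalso. apply Hno. exists m. split; [lra|auto].
      - apply Hup; lra. }
    lra.
Qed.

Lemma stable_all (tau a : R) (w : C) : 0 < tau -> Cmod w <= a -> Re w < a -> T a w tau.
Proof.
  intros Htau HWa Hre. split; auto. intros [x y] Hroot. simpl.
  destruct (Rlt_le_dec x 0) as [|Hx]; auto. exfalso.
  destruct w as [w1 w2]. unfold Re in Hre. simpl in Hre.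
  unfold cexp, Cplus, Cminus, Cmult, Copp, RtoC, Re, Im in Hroot; simpl in Hroot.
  injection Hroot as E1 E2.
  set (e := exp (- (tau * x - 0 * y))) in *.
  set (c := cos (- (tau * y + 0 * x))) in *. set (s := sin (- (tau * y + 0 * x))) in *.
  assert (Hcs : c * c + s * s = 1) by (pose proof (sin2_cos2 (- (tau * y + 0 * x))); unfold Rsqr in *; fold c s in H; lra).
  assert (He0 : 0 < e) by apply exp_pos.
  assert (He1 : e <= 1).
  { unfold e. rewrite <- exp_0. destruct (Req_dec x 0) as [->|].
    - right. f_equal. ring.
    - left. apply exp_increasing. nra. }
  assert (HW : w1 * w1 + w2 * w2 <= a * a).
  { unfold Cmod in HWa. cbn [fst snd] in HWa. pose proof (sqrt_pos (w1 ^ 2 + w2 ^ 2)).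
    assert (sqrt (w1 ^ 2 + w2 ^ 2) ^ 2 = w1 ^ 2 + w2 ^ 2) by (apply pow2_sqrt; nra).
    nra. }
  assert (Ha : 0 <= a) by (pose proof (Cmod_ge_0 (w1, w2)); lra).
  assert (Hsum : (x + a) * (x + a) + y * y = (w1 * w1 + w2 * w2) * (e * e) * (c * c + s * s)).
  { assert (x + a = w1 * (e * c) - w2 * (e * s)) by lra.
    assert (y = w1 * (e * s) + w2 * (e * c)) by lra. rewrite H, H0. ring. }
  rewrite Hcs in Hsum.
  assert ((w1 * w1 + w2 * w2) * (e * e) <= a * a).
  { assert (e * e <= 1) by nra. assert (0 <= w1 * w1 + w2 * w2) by nra. nra. }
  assert (Hy : y = 0) by nra.
  assert (Hx0 : x = 0).
  { destruct (Req_dec a 0) as [Ha0|Ha0].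
    - exfalso. assert (w1 * w1 <= 0) by nra. assert (w1 = 0) by nra. lra.
    - nra. }
  subst x y. unfold e, c, s in *.
  replace (- (tau * 0 - 0 * 0)) with 0 in * by ring.
  replace (- (tau * 0 + 0 * 0)) with 0 in * by ring.
  rewrite exp_0, cos_0, sin_0 in E1. lra.
Qed.

Lemma unstable_zero (tau a : R) : 0 < tau -> a <= 0 -> ~ T a 0%C tau.
Proof.
  intros Htau Ha [_ HT]. specialize (HT (RtoC (-a))).
  assert (Re (RtoC (-a)) < 0).
  { apply HT. unfold cexp, Cplus, Cminus, Cmult, Copp, RtoC, Re, Im; simpl.
    apply injective_projections; simpl; ring. }
  simpl in H. lra.
Qed.

Lemma cos_abs_Arg (w : C) : w <> 0%C -> Re w = Cmod w * cos (Rabs (Arg w)).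
Proof.
  intros Hw. destruct (Arg_polar w Hw) as [H _]. rewrite H.
  destruct (Rle_dec 0 (Arg w)); [rewrite Rabs_right by lra|rewrite Rabs_left, cos_neg by lra]; auto.
Qed.

Lemma acos_ge_absArg (w : C) (a : R) : w <> 0%C -> - Cmod w <= a <= Cmod w -> a <= Re w ->
  Rabs (Arg w) <= acos (a / Cmod w).
Proof.
  intros Hw Ha Hre.
  assert (HW : 0 < Cmod w) by (apply Cmod_gt_0; auto).
  rewrite (cos_abs_Arg w Hw) in Hre.
  assert (Hb : -1 <= a / Cmod w <= 1).
  { split; [apply Rmult_le_reg_r with (Cmod w)|apply Rmult_le_reg_r with (Cmod w)]; auto;
    replace (a / Cmod w * Cmod w) with a by (field; lra); lra. }
  pose proof (acos_bound (a / Cmod w)).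
  assert (Hpi : Rabs (Arg w) <= PI) by (pose proof (Arg_bound w); apply Rabs_le; lra).
  pose proof (Rabs_pos (Arg w)).
  destruct (Rle_lt_dec (Rabs (Arg w)) (acos (a / Cmod w))) as [|Hlt]; auto.
  exfalso. pose proof (cos_decreasing_1 (acos (a / Cmod w)) (Rabs (Arg w)) ltac:(lra) ltac:(lra) ltac:(lra) ltac:(lra) Hlt).
  rewrite cos_acos in H1 by auto.
  assert (Cmod w * cos (Rabs (Arg w)) < a).
  { replace a with (a / Cmod w * Cmod w) by (field; lra). nra. }
  lra.
Qed.

Lemma caseIII (tau a : R) (w : C) : 0 < tau -> a <= Re w -> ~ T a w tau.
Proof.
  intros Htau Hre.
  destruct (classic (w = 0%C)) as [->|Hw].
  - apply unstable_zero; auto.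
  - pose proof (re_le_Cmod w). pose proof (Rabs_le_between (Re w) (Cmod w)) as HH.
    apply unstable; auto.
    + destruct (Rle_dec 0 (Re w)); [rewrite Rabs_right in H by lra|rewrite Rabs_left in H by lra]; lra.
    + intros Ha. rewrite g_alpha by (auto; apply Cmod_gt_0; auto).
      pose proof (sqrt_pos (Cmod w ^ 2 - a ^ 2)).
      assert (Rabs (Arg w) <= acos (a / Cmod w)).
      { apply acos_ge_absArg; auto. split; auto.
        destruct (Rle_dec 0 (Re w)); [rewrite Rabs_right in H by lra|rewrite Rabs_left in H by lra]; lra. }
      nra.
Qed.

Lemma caseII (a : R) (w : C) : w <> 0%C -> Re w < a -> a < Cmod w ->
  0 < tau_c a w /\ (forall tau, 0 < tau -> (T a w tau <-> tau < tau_c a w)) /\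
  tau_c a w = / sqrt (Cmod w ^ 2 - a ^ 2) *
                 (Rabs (Arg w) - arccot (a / sqrt (Cmod w ^ 2 - a ^ 2))).
Proof.
  intros Hw Hre HaW.
  assert (HW : 0 < Cmod w) by (apply Cmod_gt_0; auto).
  assert (Hre2 : - Cmod w <= Re w).
  { pose proof (re_le_Cmod w). destruct (Rle_dec 0 (Re w)); [rewrite Rabs_right in H by lra|rewrite Rabs_left in H by lra]; lra. }
  assert (Hom : 0 < sqrt (Cmod w ^ 2 - a ^ 2)) by (apply sqrt_lt_R0; nra).
  set (om := sqrt (Cmod w ^ 2 - a ^ 2)) in *.
  assert (Hacos : acos (a / Cmod w) < Rabs (Arg w)).
  { assert (Hb : -1 < a / Cmod w < 1).
    { split; [apply Rmult_lt_reg_r with (Cmod w)|apply Rmult_lt_reg_r with (Cmod w)]; auto;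
      replace (a / Cmod w * Cmod w) with a by (field; lra); lra. }
    pose proof (acos_bound (a / Cmod w)).
    assert (Hpi : Rabs (Arg w) <= PI) by (pose proof (Arg_bound w); apply Rabs_le; lra).
    pose proof (Rabs_pos (Arg w)).
    destruct (Rlt_le_dec (acos (a / Cmod w)) (Rabs (Arg w))) as [|Hle]; auto.
    exfalso. rewrite (cos_abs_Arg w Hw) in Hre.
    assert (cos (acos (a / Cmod w)) <= cos (Rabs (Arg w))) by (apply cos_decr_1; lra).
    rewrite cos_acos in H1 by lra.
    assert (a <= Cmod w * cos (Rabs (Arg w))).
    { replace a with (a / Cmod w * Cmod w) by (field; lra). nra. }
    lra. }
  assert (Htc : tau_c a w = / om * (Rabs (Arg w) - acos (a / Cmod w))) by reflexivity.
  split; [|split].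
  - rewrite Htc. apply Rmult_lt_0_compat; [apply Rinv_0_lt_compat; auto | lra].
  - intros tau Htau.
    assert (Hg : gK (tau * Cmod w * exp (tau * a)) (tau * a) = acos (a / Cmod w) + tau * om)
      by (apply g_alpha; auto).
    assert (Hiff : tau < tau_c a w <-> acos (a / Cmod w) + tau * om < Rabs (Arg w)).
    { rewrite Htc. split; intros H.
      - apply Rmult_lt_compat_l with (r := om) in H; auto.
        replace (om * (/ om * (Rabs (Arg w) - acos (a / Cmod w)))) with (Rabs (Arg w) - acos (a / Cmod w)) in H by (field; lra).
        lra.
      - apply Rmult_lt_reg_l with om; auto.
        replace (om * (/ om * (Rabs (Arg w) - acos (a / Cmod w)))) with (Rabs (Arg w) - acos (a / Cmod w)) by (field; lra).
        lra. }
    split.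
    + intros HT. apply Hiff. destruct (Rlt_le_dec (acos (a / Cmod w) + tau * om) (Rabs (Arg w))) as [|Hle]; auto.
      exfalso. apply (unstable tau a w); auto; [lra|]. intros _. rewrite Hg. lra.
    + intros Hlt. apply stable_delay; auto; [lra|]. rewrite Hg. apply Hiff; auto.
  - rewrite Htc. f_equal. f_equal. unfold arccot, acos.
    assert (Hb1 : ~ a / Cmod w <= -1).
    { intro H. apply Rmult_le_compat_r with (r := Cmod w) in H; [|lra].
      replace (a / Cmod w * Cmod w) with a in H by (field; lra). lra. }
    assert (Hb2 : ~ 1 <= a / Cmod w).
    { intro H. apply Rmult_le_compat_r with (r := Cmod w) in H; [|lra].
      replace (a / Cmod w * Cmod w) with a in H by (field; lra). lra. }
    destruct (Rle_dec (a / Cmod w) (-1)); [contradiction|].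
    destruct (Rle_dec 1 (a / Cmod w)); [contradiction|].
    f_equal. f_equal.
    assert (Hs : sqrt (1 - (a / Cmod w)²) = om / Cmod w).
    { unfold om. replace (Cmod w ^ 2 - a ^ 2) with ((Cmod w)^2 * (1 - (a / Cmod w)²)) by (unfold Rsqr; field; lra).
      rewrite sqrt_mult_alt by nra. rewrite sqrt_pow2 by lra. field. lra. }
    rewrite Hs. field. lra.
Qed.

Theorem mainTheorem1 (a : R) (w : C) :
  (* (I) *)
  ((forall tau, T a w tau <-> 0 < tau) <-> (Cmod w <= a /\ Re w < a)) /\
  (* (II) *)
  (((exists tau, T a w tau) /\ (exists tau, 0 < tau /\ ~ T a w tau))
     <-> (w <> 0%C /\ Re w < a /\ a < Cmod w)) /\
  ((w <> 0%C /\ Re w < a /\ a < Cmod w) ->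
     (forall tau, T a w tau <-> 0 < tau < tau_c a w) /\
     tau_c a w = / sqrt (Cmod w ^ 2 - a ^ 2) *
                 (Rabs (Arg w) - arccot (a / sqrt (Cmod w ^ 2 - a ^ 2))) /\
     0 < tau_c a w) /\
  (* (III) *)
  ((forall tau, ~ T a w tau) <-> a <= Re w).
Proof.
  assert (TP : forall tau, T a w tau -> 0 < tau) by (intros tau [H _]; auto).
  assert (Hcases : (Cmod w <= a /\ Re w < a) \/ (w <> 0%C /\ Re w < a /\ a < Cmod w) \/ a <= Re w).
  { destruct (Rlt_le_dec (Re w) a) as [Hr|Hr]; [|right; right; auto].
    destruct (Rle_lt_dec (Cmod w) a) as [Hc|Hc]; [left; auto|].
    right; left. split; [|auto].
    intros ->. rewrite Cmod_0 in Hc. unfold Re, RtoC in Hr. simpl in Hr. lra. }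
  assert (HII : (w <> 0%C /\ Re w < a /\ a < Cmod w) ->
     (forall tau, T a w tau <-> 0 < tau < tau_c a w) /\
     tau_c a w = / sqrt (Cmod w ^ 2 - a ^ 2) *
                 (Rabs (Arg w) - arccot (a / sqrt (Cmod w ^ 2 - a ^ 2))) /\
     0 < tau_c a w).
  { intros [Hw [H1 H2]]. destruct (caseII a w Hw H1 H2) as [Hpos [Hiff Heq]].
    split; [|split; auto].
    intros tau. split.
    - intros HT. pose proof (TP _ HT). split; auto. apply Hiff; auto.
    - intros [Ht Ht']. apply Hiff; auto. }
  split; [|split; [|split]].
  - split.
    + intros Hall. destruct Hcases as [H|[H|H]]; auto.
      * exfalso. destruct (HII H) as [Hiff [_ Hpos]].
        pose proof (proj1 (Hiff (tau_c a w)) (proj2 (Hall _) Hpos)). lra.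
      * exfalso. apply (caseIII 1 a w); auto; [lra|]. apply Hall; lra.
    + intros [H1 H2] tau. split; auto. intros Ht. apply stable_all; auto.
  - split.
    + intros [[t1 Ht1] [t2 [Ht2 Hn2]]]. destruct Hcases as [H|[H|H]]; auto.
      * exfalso. apply Hn2. apply stable_all; tauto.
      * exfalso. apply (caseIII t1 a w); auto.
    + intros H. destruct (HII H) as [Hiff [_ Hpos]]. split.
      * exists (tau_c a w / 2). apply Hiff. lra.
      * exists (tau_c a w). split; auto. intros HT. apply Hiff in HT. lra.
  - exact HII.
  - split.
    + intros Hnone. destruct Hcases as [H|[H|H]]; auto.
      * exfalso. apply (Hnone 1). apply stable_all; tauto || lra.
      * exfalso. destruct (HII H) as [Hiff [_ Hpos]]. apply (Hnone (tau_c a w / 2)). apply Hiff. lra.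
    + intros H tau HT. apply (caseIII tau a w); auto.
Qed.
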